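(* Let $f_n:\{0,1\}^{m_n}\to\{0,1\}^n$ be a family of functions computable by $\mathbf{NC}^0$ circuits, and let $c$ be the maximum number of inputs affecting any single output. Let $W_1,\dots,W_{m_n}$ be independent $\{0,1\}$-valued random variables and $X'=f_n(W)$. Let $n\ge b_0\ge b_1\ge\cdots\ge b_{2c}\ge1$. Then for every $n$ there exist $0<i\le 2c$, $S\subseteq\{1,\dots,n\}$ and $T\subseteq\{1,\dots,m_n\}$ such that $|S|\ge\frac{n}{2cb_i}$, $|T|\le cn/b_{i-1}$, and the random variables $\{X'_j:j\in S\}$ are mutually independent conditioned on any fixed value of $\{W_j:j\in T\}$.
   Context: An $\mathbf{NC}^0$ circuit family is one in which each output bit depends on at most a constant number $c$ (independent of $n$) of input bits; an input ''affects'' an output if the output's value depends on it. *)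

(* Defs.v *)
From HB Require Import structures.
From mathcomp Require Import all_boot all_order all_algebra.
Set Implicit Arguments. Unset Strict Implicit. Unset Printing Implicit Defensive.
Import Order.TTheory GRing.Theory Num.Theory.
Local Open Scope ring_scope.

Definition flip (m : nat) (w : {ffun 'I_m -> bool}) (k : 'I_m) : {ffun 'I_m -> bool} :=
  [ffun k' => if k' == k then ~~ w k else w k'].

Definition affects (m n : nat) (f : {ffun 'I_m -> bool} -> 'I_n -> bool)
  (j : 'I_n) (k : 'I_m) : bool :=
  [exists w, f w j != f (flip w k) j].

Definition deps (m n : nat) (f : {ffun 'I_m -> bool} -> 'I_n -> bool) (j : 'I_n)
  : {set 'I_m} := [set k | affects f j k].

Definition locality (m n : nat) (f : {ffun 'I_m -> bool} -> 'I_n -> bool) : nat :=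
  (\max_(j : 'I_n) #|deps f j|)%N.

(* Law of independent {0,1}-valued W_1..W_m with P(W_k = 1) = p k. *)
Definition prodw (R : realFieldType) (m : nat) (p : 'I_m -> R)
  (w : {ffun 'I_m -> bool}) : R :=
  \prod_(k : 'I_m) (if w k then p k else 1 - p k).

Definition Pr (R : realFieldType) (m : nat) (p : 'I_m -> R)
  (E : pred {ffun 'I_m -> bool}) : R :=
  \sum_(w | E w) prodw p w.

Definition fixT (m : nat) (T : {set 'I_m}) (a : {ffun 'I_m -> bool})
  : pred {ffun 'I_m -> bool} :=
  fun w => [forall k in T, w k == a k].

(* The outputs {X'_j = f(W)_j : j in S} are mutually independent conditioned on
   every fixed value a of {W_k : k in T} (of positive probability): for every
   subfamily S' ⊆ S and every value x, the conditional product rule holds. *)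
Definition cond_indep (R : realFieldType) (m n : nat) (p : 'I_m -> R)
  (f : {ffun 'I_m -> bool} -> 'I_n -> bool) (S : {set 'I_n}) (T : {set 'I_m}) : Prop :=
  forall a : {ffun 'I_m -> bool}, 0 < Pr p (fixT T a) ->
  forall (S' : {set 'I_n}), S' \subset S ->
  forall x : {ffun 'I_n -> bool},
    Pr p (fun w => fixT T a w && [forall j in S', f w j == x j]) / Pr p (fixT T a)
    = \prod_(j in S') (Pr p (fun w => fixT T a w && (f w j == x j)) / Pr p (fixT T a)).

(* Main.v *)
Require Import Defs.
From HB Require Import structures.
From mathcomp Require Import all_boot all_order all_algebra.
From mathcomp Require Import ring zify lra.
Import Order.TTheory GRing.Theory Num.Theory.
Local Open Scope ring_scope.

Lemma Pr_ext (R : realFieldType) m (p : 'I_m -> R) (E E' : pred {ffun 'I_m -> bool}) :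
  E =1 E' -> Pr p E = Pr p E'.
Proof. by move=> h; rewrite /Pr; apply: eq_bigl. Qed.

Lemma dep_f m n (f : {ffun 'I_m -> bool} -> 'I_n -> bool) j (w w' : {ffun 'I_m -> bool}) :
  (forall k, k \in deps f j -> w k = w' k) -> f w j = f w' j.
Proof.
move H: #|[set k | w k != w' k]| => N.
elim: N w H => [|N IH] w H hw.
  have -> : w = w'; last by [].
  apply/ffunP => k; apply/eqP; apply: contraT => hk.
  move/eqP: H; rewrite cards_eq0 => /eqP H0.
  have : k \in [set k | w k != w' k] by rewrite inE.
  by rewrite H0 inE.
have : (0 < #|[set k | w k != w' k]|)%N by rewrite H.
rewrite card_gt0 => /set0Pn [k]; rewrite inE => hk.
have kd : k \notin deps f j by apply: contra hk => kin; rewrite hw.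
have e1 : f w j = f (flip w k) j.
  move: kd; rewrite /deps inE /affects negb_exists => /forallP /(_ w).
  by rewrite negbK => /eqP.
rewrite e1; apply: IH.
  have -> : [set k' | flip w k k' != w' k'] = [set k' | w k' != w' k'] :\ k.
    apply/setP => k'; rewrite !inE ffunE; case: (eqVneq k' k) => [->|] //=.
    by move: hk; case: (w k); case: (w' k).
  have := cardsD1 k [set k' | w k' != w' k']; rewrite inE hk H /=.
  by move=> [].
move=> k' hk'; rewrite ffunE; case: eqP => [ek|_]; last by rewrite hw.
by subst k'; rewrite hk' in kd.
Qed.

Definition mrg m (D : {set 'I_m}) (x y : {ffun 'I_m -> bool}) : {ffun 'I_m -> bool} :=
  [ffun k => if k \in D then x k else y k].
Arguments mrg {m}.

Lemma mrgK m (D : {set 'I_m}) : involutive (fun uv => (mrg D uv.1 uv.2, mrg D uv.2 uv.1)).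
Proof.
move=> [u v] /=; congr pair; apply/ffunP => k; rewrite !ffunE; by case: (k \in D).
Qed.

Lemma fixT_mrg m (T D : {set 'I_m}) a x y : [disjoint D & T] ->
  fixT T a (mrg D x y) = fixT T a y.
Proof.
move=> dis; apply: eq_forallb => k; rewrite ffunE.
case kT: (k \in T) => //=.
have : k \notin D.
  apply/negP => kD; move/disjoint_setI0: dis => /setP /(_ k).
  by rewrite !inE kD kT.
by move/negbTE => ->.
Qed.

Lemma L2 (R : realFieldType) m (p : 'I_m -> R) (T D : {set 'I_m})
  (a : {ffun 'I_m -> bool}) (A B : pred {ffun 'I_m -> bool}) :
  [disjoint D & T] ->
  (forall w w' : {ffun 'I_m -> bool}, (forall k, k \in D :|: T -> w k = w' k) -> A w = A w') ->
  (forall w w' : {ffun 'I_m -> bool}, (forall k, k \notin D -> w k = w' k) -> B w = B w') ->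
  Pr p (fun w => fixT T a w && (A w && B w)) * Pr p (fixT T a) =
  Pr p (fun w => fixT T a w && A w) * Pr p (fun w => fixT T a w && B w).
Proof.
move=> dis hA hB.
rewrite /Pr !mulr_suml.
under eq_bigr do rewrite mulr_sumr.
under [RHS]eq_bigr do rewrite mulr_sumr.
rewrite !pair_big_dep /=.
rewrite [RHS](reindex_inj (inv_inj (@mrgK m D))) /=.
apply: eq_big => [[u v]|[u v] _] /=.
  rewrite !fixT_mrg //.
  case Fu: (fixT T a u); case Fv: (fixT T a v); rewrite /= ?andbF //.
  have -> : A (mrg D u v) = A u.
    apply: hA => k; rewrite inE ffunE; case kD: (k \in D) => //= kT.
    move/forallP: Fu => /(_ k); move/forallP: Fv => /(_ k).
    by rewrite kT /= => /eqP -> /eqP ->.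
  have -> : B (mrg D v u) = B u.
    by apply: hB => k; rewrite ffunE => /negbTE ->.
  by rewrite andbT.
rewrite /prodw -[LHS]big_split -[RHS]big_split /=; apply: eq_bigr => k _; rewrite !ffunE.
by case: (k \in D) => //; rewrite mulrC.
Qed.

Lemma forall_setD1 (I : finType) (S : {set I}) j0 (P : pred I) : j0 \in S ->
  [forall j in S, P j] = P j0 && [forall j in S :\ j0, P j].
Proof.
move=> j0S; apply/forallP/andP => [h|[h0 h] j].
  split; first exact: (implyP (h j0) j0S).
  apply/forallP => j; apply/implyP; rewrite inE => /andP[_ jS]; exact: (implyP (h j) jS).
apply/implyP => jS; case: (eqVneq j j0) => [->//|ne].
apply: (implyP (forallP h j)). by rewrite !inE ne jS.
Qed.

Lemma indep_of (R : realFieldType) m n (p : 'I_m -> R)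
  (f : {ffun 'I_m -> bool} -> 'I_n -> bool) (S : {set 'I_n}) (T : {set 'I_m}) :
  (forall j j', j \in S -> j' \in S -> j != j' ->
     forall k, k \in deps f j -> k \in deps f j' -> k \in T) ->
  cond_indep p f S T.
Proof.
move=> hS a Fa S' sS' x.
have F0 : Pr p (fixT T a) != 0 by rewrite gt_eqF.
move HN: #|S'| => N.
elim: N S' HN sS' => [|N IH] S' HN sS'.
  move/eqP: HN; rewrite cards_eq0 => /eqP ->; rewrite big_set0.
  rewrite (@Pr_ext _ _ _ _ (fixT T a)) ?divff // => w /=.
  have -> : [forall j in set0, f w j == x j] = true.
    by apply/forallP => j; rewrite inE.
  by rewrite andbT.
have : (0 < #|S'|)%N by rewrite HN.
rewrite card_gt0 => /set0Pn [j0 j0S].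
have sS'' : S' :\ j0 \subset S by apply: subset_trans (subsetDl _ _) sS'.
have HN' : #|S' :\ j0| = N.
  by have := cardsD1 j0 S'; rewrite j0S HN add1n => -[].
rewrite (big_setD1 _ j0S) /= -(IH _ HN' sS'').
set D := deps f j0 :\: T.
have dis : [disjoint D & T].
  rewrite -setI_eq0; apply/eqP/setP => k; rewrite !inE.
  by case: (k \in T); rewrite ?andbF.
have e := @L2 R m p T D a (fun w => f w j0 == x j0)
   (fun w => [forall j in S' :\ j0, f w j == x j]) dis.
rewrite (@Pr_ext _ _ _ _ (fun w => fixT T a w && ((f w j0 == x j0) &&
   [forall j in S' :\ j0, f w j == x j]))); last first.
  by move=> w /=; rewrite (@forall_setD1 _ _ _ _ j0S).
rewrite -[X in X / _](mulfK F0) e; last first.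
- move=> w w' h /=; apply: eq_forallb => j; case jS: (j \in S' :\ j0) => //=.
  rewrite (@dep_f _ _ f j w w') //.
  move=> k kd; apply: h; apply/negP; rewrite inE => /andP [kT kd0].
  move: jS; rewrite !inE => /andP [ne jS].
  have := hS j0 j (subsetP sS' _ j0S) (subsetP sS' _ jS); rewrite eq_sym ne.
  by move=> /(_ isT k kd0 kd); rewrite (negbTE kT).
- move=> w w' h /=; rewrite (@dep_f _ _ f j0 w w') //.
  move=> k kd; apply: h; move: kd; rewrite /D !inE => ->; by case: (k \in T).
by field.
Qed.

Lemma card_bigcup_le (I T : finType) (A : {set I}) (F : I -> {set T}) :
  (#|\bigcup_(i in A) F i| <= \sum_(i in A) #|F i|)%N.
Proof.
elim/big_rec2: _ => [|i x y _ h]; first by rewrite cards0.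
by rewrite cardsU; lia.
Qed.

Lemma greedy (I : finType) (r : rel I) : (forall x y, r x y = r y x) ->
  forall G : {set I}, exists S : {set I},
  [/\ S \subset G, (forall j j', j \in S -> j' \in S -> j != j' -> ~~ r j j')
    & (#|G| <= \sum_(j in S) #|[set j' | (j' == j) || r j j']|)%N].
Proof.
move=> rs G; move: {2}#|G| (leqnn #|G|) => N.
elim: N G => [|N IH] G hG.
  exists set0; split; first exact: sub0set.
  - by move=> j j'; rewrite inE.
  - by rewrite big_set0.
case: (set_0Vmem G) => [->|[j jG]].
  exists set0; rewrite big_set0 cards0; split; [exact: sub0set| by move=> ??; rewrite inE| by []].
set Nj := [set j' | (j' == j) || r j j'].
have jN : j \in Nj by rewrite inE eqxx.
have hc := cardsID Nj G.
have hp : (0 < #|G :&: Nj|)%N by apply/card_gt0P; exists j; rewrite inE jG jN.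
have [S' [sS' iS' cS']] := IH (G :\: Nj) ltac:(lia).
have jS' : j \notin S'.
  by apply/negP => /(subsetP sS'); rewrite inE jN.
exists (j |: S'); split.
- apply/subsetP => y; rewrite !inE => /orP [/eqP->//|/(subsetP sS')].
  by rewrite inE => /andP [_ ->].
- move=> y z; rewrite !inE => /orP[/eqP->|yS] /orP[/eqP->|zS].
  + by rewrite eqxx.
  + move=> _; move/(subsetP sS'): zS; rewrite !inE => /andP [].
    by rewrite negb_or => /andP [_ ->].
  + move=> _; move/(subsetP sS'): yS; rewrite !inE => /andP [].
    by rewrite negb_or rs => /andP [_ ->].
  + exact: iS'.
- rewrite big_setU1 //=.
  have : (#|G :&: Nj| <= #|Nj|)%N by apply: subset_leq_card; apply: subsetIr.
  rewrite -/Nj; lia.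
Qed.

Lemma exists_le_sum (I : finType) (D : pred I) (P : pred I) :
  ([exists k in D, P k] <= \sum_(k in D) (P k : nat))%N.
Proof.
case: existsP => // [[k /andP [kD Pk]]].
by rewrite (bigD1 k) //= Pk.
Qed.

Theorem mainTheorem12 (R : realFieldType) (n m : nat)
  (f : {ffun 'I_m -> bool} -> 'I_n -> bool)
  (p : 'I_m -> R) (b : nat -> R) :
  (forall k, 0 <= p k <= 1) ->
  (0 < locality f)%N ->
  b 0%N <= n%:R ->
  (forall i, (i < 2 * locality f)%N -> b i.+1 <= b i) ->
  1 <= b (2 * locality f)%N ->
  exists (i : nat) (S : {set 'I_n}) (T : {set 'I_m}),
    [/\ (0 < i <= 2 * locality f)%N,
        n%:R / ((2 * locality f)%:R * b i) <= #|S|%:R,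
        #|T|%:R <= (locality f)%:R * n%:R / b i.-1
      & cond_indep p f S T].
Proof.
move=> hp c0 hb0 hmon hb2c.
set c := locality f in c0 hmon hb2c *.
have mono : forall i j, (i <= j <= 2 * c)%N -> b j <= b i.
  move=> i j /andP [ij jc]; elim: j ij jc => [|j IH] ij jc.
    by rewrite leqn0 in ij; rewrite (eqP ij).
  rewrite leq_eqVlt in ij; case/orP: ij => [/eqP->//| ij].
  apply: le_trans (hmon j _) (IH _ _); lia.
have bge1 : forall i, (i <= 2 * c)%N -> 1 <= b i.
  by move=> i hi; apply: le_trans hb2c (mono _ _ _); rewrite hi leqnn.
have bpos : forall i, (i <= 2 * c)%N -> 0 < b i.
  by move=> i hi; apply: lt_le_trans ltr01 (bge1 _ hi).
have depsc : forall j, (#|deps f j| <= c)%N.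
  move=> j; rewrite /c /locality. exact: leq_bigmax.
pose deg k := #|[set j | k \in deps f j]|.
have sumdeg : (\sum_k deg k = \sum_j #|deps f j|)%N.
  transitivity (\sum_k \sum_j ((k \in deps f j) : nat))%N.
    apply: eq_bigr => k _; rewrite /deg -sum1_card big_mkcond /=.
    by apply: eq_bigr => j _; rewrite inE; case: (k \in deps f j).
  rewrite exchange_big; apply: eq_bigr => j _; rewrite -sum1_card [RHS]big_mkcond /=.
  by apply: eq_bigr => k _; case: (k \in deps f j).
have sumc : (\sum_j #|deps f j| <= n * c)%N.
  apply: (@leq_trans (\sum_(j < n) c)%N); first by apply: leq_sum => j _; exact: depsc.
  by rewrite sum_nat_const card_ord.
pose inC i k := (b i <= (deg k)%:R) && ((deg k)%:R < b i.-1).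
have uniqC : forall i i' k, (0 < i <= 2 * c)%N -> (0 < i' <= 2 * c)%N ->
    inC i k -> inC i' k -> i = i'.
  have H : forall i i' k, (0 < i)%N -> (i' <= 2 * c)%N -> (i < i')%N ->
      inC i k -> inC i' k -> False.
    move=> i i' k i0 i'c ii' /andP [h1 _] /andP [_ h2].
    have := mono i i'.-1 ltac:(apply/andP; split; lia).
    move=> h3; have := lt_le_trans h2 h3.
    by rewrite ltNge h1.
  move=> i i' k /andP [i0 ic] /andP [i'0 i'c] h h'.
  case: (ltngtP i i') => // ii'; first by case: (H _ _ _ i0 i'c ii' h h').
  by case: (H _ _ _ i'0 ic ii' h' h).
pose Bad i := [set j | [exists k in deps f j, inC i k]].
have sumBad : (\sum_(i < 2 * c) #|Bad i.+1| <= n * c)%N.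
  apply: leq_trans sumc.
  have -> : (\sum_(i < 2 * c) #|Bad i.+1| = \sum_(i < 2 * c) \sum_j ([exists k in deps f j, inC i.+1 k] : nat))%N.
    apply: eq_bigr => i _; rewrite -sum1_card big_mkcond /=.
    by apply: eq_bigr => j _; rewrite inE; case: ([exists k in deps f j, inC i.+1 k]).
  rewrite exchange_big; apply: leq_sum => j _.
  apply: (@leq_trans (\sum_(i < 2*c) \sum_(k in deps f j) (inC i.+1 k : nat))%N).
    by apply: leq_sum => i _; apply: exists_le_sum.
  rewrite exchange_big /=.
  rewrite -sum1_card; apply: leq_sum => k _.
  case: (pickP (fun i : 'I_(2 * c) => inC i.+1 k)) => [i0 hi0|none].
    rewrite (bigD1 i0) //= hi0 big1 // => i ne; apply/eqP; rewrite eqb0.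
    apply/negP => hi; case/eqP: ne; apply: val_inj; apply/succn_inj.
    apply: uniqC hi hi0; apply/andP; split => //; exact: ltn_ord.
  by rewrite big1 // => i _; rewrite none.
have [i0 hi0] : exists i0 : 'I_(2 * c), (2 * #|Bad i0.+1| <= n)%N.
  apply/existsP; apply: contraT; rewrite negb_exists => /forallP hall.
  have h1 : (\sum_(i < 2 * c) n.+1 <= \sum_(i < 2 * c) 2 * #|Bad i.+1|)%N.
    by apply: leq_sum => i _; have := hall i; rewrite -ltnNge.
  have h2 : (\sum_(i < 2 * c) 2 * #|Bad i.+1| = 2 * \sum_(i < 2 * c) #|Bad i.+1|)%N.
    by symmetry; apply: big_distrr.
  move: h1; rewrite h2 sum_nat_const card_ord => h; suff: False by []; nia.
pose i := i0.+1.
pose T := [set k | b i0 <= (deg k)%:R].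
pose G := ~: Bad i.
pose r := fun j j' : 'I_n => [exists k, [&& k \in deps f j, k \in deps f j' & k \notin T]].
have rs : forall x y, r x y = r y x.
  by move=> x y; apply: eq_existsb => k; rewrite andbCA.
have [S [sSG indS cardG]] := @greedy _ r rs G.
have i0c : (i0 < 2 * c)%N := ltn_ord i0.
have Nb : forall j, j \in G -> (#|[set j' | (j' == j) || r j j']|)%:R <= c%:R * b i.
  move=> j jG.
  pose D := deps f j :\: T.
  have degD : forall k, k \in D -> (deg k)%:R < b i.
    move=> k; rewrite !inE => /andP [kT kd].
    move: jG; rewrite !inE negb_exists => /forallP /(_ k); rewrite /deps inE kd /= /inC /=.
    rewrite -ltNge in kT; rewrite kT andbT -ltNge; done.
  case: (set_0Vmem D) => [D0|[k0 k0D]].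
    have : [set j' | (j' == j) || r j j'] \subset [set j].
      apply/subsetP => y; rewrite !inE => /orP [//|/existsP [k /and3P [k1 k2 k3]]].
      have : k \in D by rewrite /D in_setD k1 k3.
      by rewrite D0 inE.
    move/subset_leq_card; rewrite cards1 => h.
    apply: (@le_trans _ _ 1).
      by rewrite lern1.
    apply: (@le_trans _ _ (1 * 1)); first by rewrite mulr1.
    by apply: ler_pM => //; [rewrite ler1n | exact: bge1].
  have sub : [set j' | (j' == j) || r j j'] \subset \bigcup_(k in D) [set j' | k \in deps f j'].
    apply/subsetP => y; rewrite !inE => /orP [/eqP->|/existsP [k /and3P [k1 k2 k3]]].
      apply/bigcupP; exists k0 => //; rewrite inE; move: k0D; rewrite !inE => /andP [_ ->] //.
    apply/bigcupP; exists k; [by rewrite /D in_setD k1 k3 | by rewrite inE].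
  have h1 := leq_trans (subset_leq_card sub) (card_bigcup_le _ _ _ _).
  apply: (@le_trans _ _ (\sum_(k in D) (deg k)%:R)).
    by rewrite -natr_sum ler_nat.
  apply: (@le_trans _ _ (\sum_(k in D) b i)).
    by apply: ler_sum => k kD; apply/ltW/degD.
  rewrite sumr_const -(mulr_natl (b i)); apply: ler_wpM2r; first exact/ltW/bpos.
  rewrite ler_nat; apply: leq_trans (depsc j); apply: subset_leq_card; apply: subsetDl.
exists i, S, T; split.
- by apply/andP; split.
- rewrite ler_pdivrMr; last by rewrite mulr_gt0 // ?ltr0n ?muln_gt0 ?c0 // bpos.
  have hG : (n <= 2 * #|G|)%N.
    have := cardsC (Bad i); rewrite card_ord -/G => hc; move: hi0; rewrite -/i => hi; lia.
  have hGS : (#|G|%:R : R) <= #|S|%:R * (c%:R * b i).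
    apply: (@le_trans _ _ (\sum_(j in S) (#|[set j' | (j' == j) || r j j']|)%:R)).
      by rewrite -natr_sum ler_nat.
    apply: (@le_trans _ _ (\sum_(j in S) (c%:R * b i))).
      by apply: ler_sum => j jS; apply: Nb; apply: (subsetP sSG).
    by rewrite sumr_const -(mulr_natl (c%:R * b i)).
  have hn : (n%:R : R) <= 2%:R * #|G|%:R by rewrite -natrM ler_nat.
  rewrite natrM; nra.
- rewrite ler_pdivlMr; last exact: bpos (ltnW i0c).
  apply: (@le_trans _ _ (\sum_(k in T) b i0)).
    by rewrite sumr_const mulr_natl.
  apply: (@le_trans _ _ (\sum_(k in T) (deg k)%:R)).
    by apply: ler_sum => k; rewrite inE.
  apply: (@le_trans _ _ (\sum_k (deg k)%:R)).
    rewrite -!natr_sum ler_nat [leqRHS](bigID (mem T)) /=; apply: leq_addr.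
  rewrite -natr_sum sumdeg -natrM ler_nat (mulnC c n); exact: sumc.
- apply: indep_of => j j' jS j'S ne k kj kj'.
  have := indS j j' jS j'S ne; rewrite negb_exists => /forallP /(_ k).
  by rewrite kj kj' /= negbK.
Qed.
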